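(* For every instance of (weighted) Maximum Coverage with covering multiplicity $r$, the greedy algorithm (with arbitrary tie-breaking) outputs $k$ sets whose union has weight at least $\left(1-(1-1/r)^r\right)$ times the optimum weight.
   Context: An instance of weighted Maximum Coverage is $({U},\mathcal{R},k)$ with ${U}$ finite, $\mathcal{R}$ a collection of subsets of ${U}$, $k$ a positive integer, and weights $w:{U}\to\mathbb{R}_{\ge0}$, with $w(S)=\sum_{x\in S}w(x)$; the goal is to choose $k$ sets of $\mathcal{R}$ maximizing the weight of their union (the unweighted problem is the case $w\equiv1$). The greedy algorithm chooses $k$ sets sequentially, each new set maximizing the weight of the elements it covers that are not covered by previously chosen sets. The instance has covering multiplicity $r$ if for every $k$-tuple of sets $a_1,\dots,a_k\in\mathcal{R}$ there exists an optimal solution $(o_1,\dots,o_k)$, with union denoted $OPT$, such that each set $a_i\cap OPT$ ($1\le i\le k$) is contained in the union of some $r$ elements of $\{o_1,\dots,o_k\}$. *)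

(* Defs.v *)
From HB Require Import structures.
From mathcomp Require Import all_boot all_order all_algebra.
Set Implicit Arguments. Unset Strict Implicit. Unset Printing Implicit Defensive.
Import Order.TTheory GRing.Theory Num.Theory.
Local Open Scope ring_scope.

Section MaxCov.
Variables (F : realFieldType) (U : finType).

Definition weight (w : U -> F) (S : {set U}) : F := \sum_(x in S) w x.

Definition feasible (Rc : {set {set U}}) (k : nat) (o : 'I_k -> {set U}) : Prop :=
  forall i, o i \in Rc.

Definition sol_union (k : nat) (o : 'I_k -> {set U}) : {set U} :=
  \bigcup_(i < k) o i.

Definition optimal (w : U -> F) (Rc : {set {set U}}) (k : nat)
    (o : 'I_k -> {set U}) : Prop :=
  feasible Rc o /\
  forall o' : 'I_k -> {set U}, feasible Rc o' ->
    weight w (sol_union o') <= weight w (sol_union o).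

Definition covering_multiplicity (w : U -> F) (Rc : {set {set U}}) (k r : nat)
    : Prop :=
  forall a : 'I_k -> {set U}, feasible Rc a ->
    exists o : 'I_k -> {set U}, optimal w Rc o /\
      forall i : 'I_k, exists J : {set 'I_k},
        (#|J| <= r)%N /\ a i :&: sol_union o \subset \bigcup_(j in J) o j.

Definition covered_before (k : nat) (g : 'I_k -> {set U}) (i : 'I_k) : {set U} :=
  \bigcup_(j < k | (j < i)%N) g j.

(* g is a possible output of the greedy algorithm (arbitrary tie-breaking):
   each g_i is in Rc and maximizes the weight of newly covered elements. *)
Definition greedy_output (w : U -> F) (Rc : {set {set U}}) (k : nat)
    (g : 'I_k -> {set U}) : Prop :=
  forall i : 'I_k, g i \in Rc /\
    forall S, S \in Rc ->
      weight w (S :\: covered_before g i) <= weight w (g i :\: covered_before g i).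

End MaxCov.

(* Main.v *)
Set Warnings "-notation-overridden,-ambiguous-paths,-notation-incompatible-prefix".
Require Import Defs.
From HB Require Import structures.
From mathcomp Require Import all_boot all_order all_algebra.
From mathcomp Require Import ring lra zify.
Import Order.TTheory GRing.Theory Num.Theory.
Local Open Scope ring_scope.

Set Implicit Arguments. Unset Strict Implicit. Unset Printing Implicit Defensive.

Lemma exists_sub (T : finType) (A : {set T}) (n : nat) :
  (n <= #|A|)%N -> exists X : {set T}, X \subset A /\ #|X| = n.
Proof.
elim: n => [|n IH] H.
  by exists set0; rewrite sub0set cards0.
have [X [sXA cX]] := IH (ltnW H).
have : (0 < #|A :\: X|)%N.
  rewrite cardsD (setIidPr sXA) cX; lia.
case/card_gt0P => x; rewrite inE => /andP [xX xA].
exists (x |: X); split.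
  by rewrite subUset sub1set xA sXA.
by rewrite cardsU1 xX cX.
Qed.

Section Game.
Variables (F : realFieldType) (B : finType) (r L : nat).
Variables (d : nat -> F) (val : B -> nat -> F) (T : nat -> {set B}).
Hypothesis r_gt0 : (0 < r)%N.
Hypothesis HT : forall t, (t < r * L)%N -> (#|T t| <= r)%N.
Hypothesis H1 : forall t j, (t < r * L)%N -> val j t <= d t.
Hypothesis H2 : forall t j, (t < r * L)%N -> j \notin T t -> val j t.+1 = val j t.
Hypothesis H3 : forall t, (t < r * L)%N -> \sum_j (val j t - val j t.+1) <= d t.
Hypothesis H4 : forall t j, (t < r * L)%N -> val j t.+1 <= val j t.
Hypothesis H0 : forall t j, 0 <= val j t.

Lemma d_ge0 t : (t < r * L)%N -> 0 <= d t.
Proof.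
move=> ht; apply: le_trans (H3 ht).
by apply: sumr_ge0 => j _; rewrite subr_ge0 H4.
Qed.

Lemma round n : forall s (A : {set B}), (s + n <= r * L)%N -> (#|A| <= n * r)%N ->
  r%:R^-1 * \sum_(j in A) val j s <= \sum_(s <= t < s + n) d t.
Proof.
elim: n => [|n IH] s A hs hA.
  move: hA; rewrite mul0n leqn0 => /eqP/cards0_eq ->.
  by rewrite big_set0 mulr0 addn0 big_geq.
have hsr : (s < r * L)%N by lia.
rewrite big_ltn; last lia.
rewrite -addSnnS.
have dge := d_ge0 hsr.
have [R [sRA sTR cR cAR]] : exists R : {set B}, [/\ R \subset A,
    A :&: T s \subset R, (#|R| <= r)%N & (#|A :\: R| <= n * r)%N].
  have hA1 : (#|A :&: T s| <= r)%N.
    by apply: leq_trans (HT hsr); apply: subset_leq_card; apply: subsetIr.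
  have := cardsID (T s) A => hID.
  have [X [sX cX]] := exists_sub (geq_minl #|A :\: T s| (r - #|A :&: T s|)).
  have hI : #|(A :&: T s) :&: X| = 0%N.
    apply/eqP; rewrite cards_eq0; apply/eqP/setP => x; rewrite !inE.
    apply/negP => /andP [/andP [xA xT] xX].
    by move: (subsetP sX x xX); rewrite !inE xT.
  have cU := cardsU (A :&: T s) X; rewrite hI subn0 in cU.
  have sRA : (A :&: T s) :|: X \subset A.
    rewrite subUset subsetIl; apply: subset_trans sX _; exact: subsetDl.
  exists ((A :&: T s) :|: X); split => //.
  - exact: subsetUl.
  - rewrite cU cX; lia.
  - rewrite cardsD (setIidPr sRA) cU cX; lia.
rewrite (big_setID R) /= (setIidPr sRA) mulrDr.
apply: lerD.
  have hR : \sum_(j in R) val j s <= #|R|%:R * d s.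
    rewrite -sum1_card natr_sum mulr_suml.
    by apply: ler_sum => j _; rewrite mul1r H1.
  have r0 : 0 < r%:R :> F by rewrite ltr0n.
  rewrite -(ler_pM2l r0) mulrA mulfV ?gt_eqF // mul1r.
  apply: (le_trans hR); apply: ler_wpM2r => //.
  by rewrite ler_nat.
have -> : \sum_(j in A :\: R) val j s = \sum_(j in A :\: R) val j s.+1.
  apply: eq_bigr => j; rewrite inE => /andP [jR jA].
  rewrite H2 //; apply/negP => jT; move/negP: jR; apply.
  by apply: (subsetP sTR); rewrite inE jA jT.
apply: IH => //; lia.
Qed.

Lemma tele n : (n <= r * L)%N ->
  \sum_j val j 0 - \sum_j val j n <= \sum_(0 <= t < n) d t.
Proof.
elim: n => [|n IH] hn; first by rewrite subrr big_geq.
rewrite big_nat_recr //=.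
have h3 := H3 hn; rewrite sumrB in h3.
have := IH (ltnW hn); lra.
Qed.

Lemma game : (#|B| <= L * r)%N ->
  (1 - (1 - r%:R^-1) ^+ r) * \sum_j val j 0 <= \sum_(0 <= t < r * L) d t.
Proof.
move=> hB.
set W := \sum_j val j 0.
have W0 : 0 <= W by apply: sumr_ge0.
have q0 : 0 <= 1 - r%:R^-1 :> F.
  by rewrite subr_ge0 invf_le1 ?ler1n ?ltr0n.
suff : forall m, (m <= r)%N ->
    W - \sum_(0 <= t < m * L) d t <= (1 - r%:R^-1) ^+ m * W.
  by move/(_ r (leqnn r)); rewrite mulnC; lra.
elim=> [|m IH] hm; first by rewrite mul0n big_geq // expr0 mul1r subr0.
have hmL : (m * L + L <= r * L)%N by rewrite addnC -mulSn leq_mul2r hm orbT.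
have hrd := round (s := m * L) (n := L) (A := [set: B]) hmL.
rewrite cardsT in hrd; have {}hrd := hrd hB.
rewrite (eq_bigl xpredT) in hrd; last by move=> j; rewrite in_setT.
have ht := tele (leq_trans (leq_addr _ _) hmL).
rewrite mulSn [(L + _)%N]addnC (@big_cat_nat _ _ _ (m * L)) //=; last by rewrite leq_addr.
have {}IH := IH (ltnW hm).
rewrite exprS.
set X := \sum_(0 <= t < m * L) d t in IH ht *.
set Y := \sum_(m * L <= t < m * L + L) d t in hrd *.
set S := \sum_j val j (m * L) in ht hrd.
set q := 1 - r%:R^-1 in q0 *.
have : r%:R^-1 * (W - X) <= r%:R^-1 * S.
  by apply: ler_wpM2l; [rewrite invr_ge0 ler0n | rewrite -/W in ht; lra].
have : q * (W - X) <= q * ((q ^+ m) * W) by rewrite ler_wpM2l.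
have e : q * (W - X) = (W - X) - r%:R^-1 * (W - X) by rewrite /q; ring.
rewrite e -mulrA.
move: (r%:R^-1 * (W - X)) (q * (q ^+ m * W)) => P Z.
lra.
Qed.
End Game.

Local Open Scope nat_scope.
Lemma eS r t c : (0 < r)%N -> (c < r)%N ->
  (t.+1 %/ r + (c < t.+1 %% r) = t %/ r + (c < t %% r) + (t %% r == c))%N.
Proof.
move=> r0 cr.
rewrite modnS divnS //.
have := ltn_pmod t r0.
case: ifP => hd hm.
  have : (t %% r).+1 = r.
    apply/eqP; rewrite eqn_leq hm /=; apply: dvdn_leq => //.
    by rewrite -(dvdn_addr _ (dvdn_mull (t %/ r) (dvdnn r))) addnS -divn_eq.
  move: (t %/ r) (t %% r) => a b. lia.
move: (t %/ r) (t %% r) hm => a b. lia.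
Qed.
Lemma divsmall r t M : (t < r)%N -> ((t + r * M) %/ r = M)%N.
Proof. move=> h. rewrite addnC mulnC divnMDl ?divn_small //; lia. Qed.

Local Open Scope ring_scope.
Section Old.
Variables (F : realFieldType) (B0 : finType) (K r : nat).
Variables (dn : nat -> F) (vn : B0 -> nat -> F) (Jn : nat -> {set B0}).
Hypothesis r_gt0 : (0 < r)%N.
Hypothesis hB0 : (#|B0| <= K)%N.
Hypothesis OJ : forall n, (n < K)%N -> (#|Jn n| <= r)%N.
Hypothesis O1 : forall n j, (n < K)%N -> vn j n <= dn n.
Hypothesis O2 : forall n j, (n < K)%N -> j \notin Jn n -> vn j n.+1 = vn j n.
Hypothesis O3 : forall n, (n < K)%N -> \sum_j (vn j n - vn j n.+1) <= dn n.
Hypothesis O4 : forall n j, (n < K)%N -> vn j n.+1 <= vn j n.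
Hypothesis O0 : forall n j, 0 <= vn j n.

Let e t (c : 'I_r) := (t %/ r + (c < t %% r))%N.
Let val (p : B0 * 'I_r) t := vn p.1 (e t p.2) / r%:R.
Let d t := dn (t %/ r)%N / r%:R.
Let T t := [set p : B0 * 'I_r | (p.1 \in Jn (t %/ r)%N) && (p.2 == t %% r :> nat)%N].

Let eSr t (c : 'I_r) : e t.+1 c = (e t c + (t %% r == c))%N.
Proof. by rewrite /e eS. Qed.

Let tK t : (t < r * K)%N -> (t %/ r < K)%N.
Proof. by move=> h; rewrite ltn_divLR // mulnC. Qed.

Let r0 : 0 < r%:R :> F. Proof. by rewrite ltr0n. Qed.

Let divr_le (a b : F) : a <= b -> a / r%:R <= b / r%:R.
Proof. by move=> h; apply: ler_wpM2r => //; rewrite invr_ge0 ler0n. Qed.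

Let mulnr_div (x : F) : (x / r%:R) *+ r = x.
Proof. by rewrite -[LHS]mulr_natr divfK // gt_eqF. Qed.

Let sumdiv M : \sum_(0 <= t < r * M) d t = \sum_(0 <= n < M) dn n.
Proof.
elim: M => [|M IH]; first by rewrite muln0 !big_geq.
rewrite mulnS addnC (@big_cat_nat _ _ _ (r * M)) //=; last exact: leq_addr.
rewrite IH big_nat_recr //=; congr (_ + _).
rewrite -{1}(add0n (r * M)%N) big_addn addKn.
rewrite (eq_big_nat _ _ (F2 := fun _ => dn M / r%:R)); last first.
  by move=> t /andP [_ ht]; rewrite /d divsmall.
by rewrite sumr_const_nat subn0 mulnr_div.
Qed.

Lemma old_game :
  (1 - (1 - r%:R^-1) ^+ r) * \sum_j vn j 0 <= \sum_(0 <= n < K) dn n.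
Proof.
have HT : forall t, (t < r * K)%N -> (#|T t| <= r)%N.
  move=> t ht; apply: leq_trans (OJ (tK ht)).
  apply: leq_trans (leq_imset_card (fun j => (j, Ordinal (ltn_pmod t r_gt0))) (Jn (t %/ r)%N)).
  apply: subset_leq_card; apply/subsetP => -[j c]; rewrite inE /= => /andP [hj hc].
  apply/imsetP; exists j => //; congr pair; apply: val_inj; exact/eqP.
have H1 : forall t j, (t < r * K)%N -> val j t <= d t.
  move=> t [j c] ht; rewrite /val /d /=; apply: divr_le.
  have hi := tK ht.
  rewrite /e; case: (c < t %% r)%N; rewrite ?addn0 ?addn1.
    exact: le_trans (O4 _ hi) (O1 _ hi).
  exact: O1.
have H2 : forall t j, (t < r * K)%N -> j \notin T t -> val j t.+1 = val j t.
  move=> t [j c] ht; rewrite inE /= negb_and => hn.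
  rewrite /val /= eSr; case: eqP => [hc|]; rewrite ?addn0 //.
  rewrite /e -hc ltnn !addn0 addn1 O2 ?tK //.
  by move: hn; rewrite hc eqxx orbF.
have H3 : forall t, (t < r * K)%N -> \sum_j (val j t - val j t.+1) <= d t.
  move=> t ht.
  have -> : \sum_(p : B0 * 'I_r) (val p t - val p t.+1) =
      \sum_j \sum_(c : 'I_r) (val (j, c) t - val (j, c) t.+1).
    by rewrite pair_big /=.
  set c0 := Ordinal (ltn_pmod t r_gt0).
  have hj : forall j, \sum_(c : 'I_r) (val (j, c) t - val (j, c) t.+1) =
      (vn j (t %/ r)%N - vn j (t %/ r)%N.+1) / r%:R.
    move=> j; rewrite (bigD1 c0) //= big1 ?addr0.
      rewrite /val /= eSr /= eqxx /e /= ltnn addn0 addn1.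
      by rewrite mulrBl.
    move=> c hc; rewrite /val /= eSr.
    have -> : (t %% r == c)%N = false.
      apply/negP => /eqP h; move/negP: hc; apply; apply/eqP; apply: val_inj => /=.
      by rewrite h.
    by rewrite addn0 subrr.
  rewrite (eq_bigr _ (fun j _ => hj j)).
  by rewrite -mulr_suml; apply: divr_le; apply: O3; apply: tK.
have H4 : forall t j, (t < r * K)%N -> val j t.+1 <= val j t.
  move=> t [j c] ht; rewrite /val /= eSr; case: eqP => hc; rewrite ?addn0 //.
  apply: divr_le; rewrite addn1 /e -hc ltnn addn0; apply: O4; exact: tK.
have H0 : forall t j, 0 <= val j t.
  by move=> t [j c]; rewrite /val divr_ge0 ?ler0n.
have hB : (#|{: B0 * 'I_r}| <= K * r)%N.
  by rewrite card_prod card_ord leq_mul2r hB0 orbT.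
have := game r_gt0 HT H1 H2 H3 H4 H0 hB.
rewrite sumdiv.
suff -> : \sum_(p : B0 * 'I_r) val p 0 = \sum_j vn j 0 by [].
rewrite -(pair_big xpredT xpredT (fun j (c : 'I_r) => val (j, c) 0)) /=.
apply: eq_bigr => j _.
rewrite (eq_bigr (fun _ => vn j 0 / r%:R)); last first.
  by move=> c _; rewrite /val /e /= div0n mod0n ltn0.
by rewrite sumr_const card_ord mulnr_div.
Qed.
End Old.

Section Weights.
Variables (F : realFieldType) (U : finType) (w : U -> F).
Hypothesis w0 : forall x, 0 <= w x.

Lemma weight_ge0 S : 0 <= weight w S.
Proof. by apply: sumr_ge0. Qed.

Lemma weight_split (S A : {set U}) : weight w S = weight w (S :&: A) + weight w (S :\: A).
Proof. by rewrite /weight (big_setID A). Qed.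

Lemma weight_mono (S1 S2 : {set U}) : S1 \subset S2 -> weight w S1 <= weight w S2.
Proof.
move=> h; rewrite (weight_split S2 S1) (setIidPr h) lerDl; exact: weight_ge0.
Qed.

Lemma weight_partition (I : finType) (f : U -> I) (S : {set U}) :
  \sum_i weight w [set x in S | f x == i] = weight w S.
Proof.
rewrite /weight (partition_big f xpredT) //=.
by apply: eq_bigr => i _; apply: eq_bigl => x; rewrite inE.
Qed.
End Weights.

Unset Implicit Arguments.

Theorem theorem4p1 (F : realFieldType) (U : finType) (Rc : {set {set U}})
    (k r : nat) (w : U -> F) :
  (0 < k)%N -> (0 < r)%N ->
  (forall x, 0 <= w x) ->
  covering_multiplicity w Rc k r ->
  forall g : 'I_k -> {set U}, greedy_output w Rc g ->
  forall o : 'I_k -> {set U}, optimal w Rc o ->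
    (1 - (1 - r%:R^-1) ^+ r) * weight w (sol_union o)
      <= weight w (sol_union g).
Proof.
move=> k0 r0 w0 CM g Hg o Ho.
have feas : feasible Rc g by move=> i; case: (Hg i).
have [o' [Ho' HJ]] := CM g feas.
have [J HJ'] := fin_all_exists HJ.
have q01 : 0 <= 1 - (1 - r%:R^-1) ^+ r :> F.
  rewrite subr_ge0 exprn_ile1 // ?subr_ge0 ?gerBl ?invr_ge0 ?ler0n //.
  by rewrite invf_le1 ?ler1n ?ltr0n.
have wo : weight w (sol_union o) <= weight w (sol_union o') by apply: (Ho'.2); case: Ho.
apply: le_trans (ler_wpM2l q01 wo) _.
move: k k0 CM g Hg o Ho feas o' Ho' HJ J HJ' {wo} => [//|k] _ _ g Hg _ _ feas o' Ho' _ J HJ'.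
set K := k.+1.
pose Cn n := \bigcup_(j < K | (j < n)%N) g j.
pose OPT := sol_union o'.
have CnP : forall n x, reflect (exists2 j : 'I_K, (j < n)%N & x \in g j) (x \in Cn n).
  by move=> n x; apply: bigcupP.
have Cn_mono : forall n, Cn n \subset Cn n.+1.
  move=> n; apply/subsetP => x /CnP [j hj xj]; apply/CnP; exists j => //; exact: ltnW.
have CnS : forall n x, x \in Cn n.+1 -> x \notin Cn n ->
    (n < K)%N /\ x \in g (inord n) :\: Cn n.
  move=> n x /CnP [j hj xj] xn.
  have jn : nat_of_ord j = n.
    apply/eqP; rewrite eqn_leq -ltnS hj /=; rewrite leqNgt; apply/negP => hjn.
    by move/negP: xn; apply; apply/CnP; exists j.
  have hn : (n < K)%N by rewrite -jn.
  split => //; rewrite inE xn /=.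
  have -> : (inord n : 'I_K) = j by apply: val_inj; rewrite /= inordK.
  exact: xj.
have CnS' : forall n x, (n < K)%N -> x \in g (inord n) -> x \in Cn n.+1.
  move=> n x hn xg; apply/CnP; exists (inord n) => //; by rewrite inordK.
have Cn_cb : forall i : 'I_K, covered_before g i = Cn i by move=> i.
have uniq_i : forall (i i' : 'I_K) x, x \in g i :\: Cn i -> x \in g i' :\: Cn i' -> i = i'.
  move=> i i' x /setDP [gi xi] /setDP [gi' xi'].
  apply: val_inj; case: (ltngtP i i') => // h.
    by case/negP: xi'; apply/CnP; exists i.
  by case/negP: xi; apply/CnP; exists i'.
pose bin (x : U) : 'I_K := if [pick i | x \in g i :\: Cn i] is Some i
  then odflt ord0 [pick j in J i | x \in o' j] else odflt ord0 [pick j | x \in o' j].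
have binP : forall x, x \in OPT ->
    x \in o' (bin x) /\ (forall i, x \in g i :\: Cn i -> bin x \in J i).
  move=> x xO; rewrite /bin; case: pickP => [i /= hi | hn].
    have : x \in \bigcup_(j in J i) o' j.
      apply: (subsetP (HJ' i).2); rewrite inE xO andbT.
      by case/setDP: hi.
    case/bigcupP => j jJ xj.
    case: pickP => [j' /andP [j'J xj'] | hn2]; last by move: (hn2 j); rewrite jJ xj.
    split => //= i' hi'.
    by rewrite -(uniq_i _ _ _ hi hi').
  split; last by move=> i hi; move: (hn i); rewrite hi.
  case: pickP => [j /= xj | hn2] //.
  by move: xO => /bigcupP [j _ xj]; move: (hn2 j); rewrite xj.
pose p j := [set x in OPT | bin x == j].
pose vn j n := weight w (p j :\: Cn n).
pose dn n := if (n < K)%N then weight w (g (inord n) :\: Cn n) else 0.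
pose Jn n := if (n < K)%N then J (inord n) else set0.
have OJ : forall n, (n < K)%N -> (#|Jn n| <= r)%N.
  by move=> n hn; rewrite /Jn hn; exact: (HJ' _).1.
have O1 : forall n j, (n < K)%N -> vn j n <= dn n.
  move=> n j hn; rewrite /vn /dn hn.
  have sub : p j :\: Cn n \subset o' j :\: Cn n.
    apply/subsetP => x; rewrite !inE => /andP [xn /andP [xO /eqP <-]].
    by rewrite xn; exact: (binP x xO).1.
  apply: le_trans (weight_mono w0 sub) _.
  have h := (Hg (inord n)).2 (o' j) (Ho'.1 j).
  by rewrite (Cn_cb (inord n)) inordK in h.
have O2 : forall n j, (n < K)%N -> j \notin Jn n -> vn j n.+1 = vn j n.
  move=> n j hn hj; rewrite /vn; congr weight; apply/setP => x; rewrite !inE.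
  case xO: (x \in OPT); rewrite ?andbF //=.
  case bj: (bin x == j); rewrite ?andbF // !andbT.
  apply/idP/idP => h.
    apply/negP => xn; move/negP: h; apply; exact: (subsetP (Cn_mono n)).
  apply/negP => xn1; have [_ hg] := CnS n x xn1 h.
  have hg' : x \in g (inord n) :\: Cn (inord n : 'I_K) by rewrite inordK.
  have := (binP x xO).2 _ hg'; rewrite (eqP bj) => hJ.
  by rewrite /Jn hn hJ in hj.
have O3 : forall n, (n < K)%N -> \sum_j (vn j n - vn j n.+1) <= dn n.
  move=> n hn.
  pose E := (OPT :\: Cn n) :&: Cn n.+1.
  have e1 : forall j, vn j n - vn j n.+1 = weight w [set x in E | bin x == j].
    move=> j; rewrite /vn (weight_split w (p j :\: Cn n) (Cn n.+1)).
    have -> : (p j :\: Cn n) :\: Cn n.+1 = p j :\: Cn n.+1.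
      apply/setP => x; rewrite !inE.
      case xn1: (x \in Cn n.+1) => //=.
      by have -> : (x \in Cn n) = false by apply/negP => xn; move/negP: xn1; apply; exact: (subsetP (Cn_mono n)).
    have -> : (p j :\: Cn n) :&: Cn n.+1 = [set x in E | bin x == j].
      by apply/setP => x; rewrite !inE; case: (x \in Cn n); case: (x \in OPT); case: (x \in Cn n.+1); case: (bin x == j).
    by rewrite addrK.
  rewrite (eq_bigr _ (fun j _ => e1 j)) weight_partition /dn hn.
  apply: weight_mono => //; apply/subsetP => x; rewrite !inE => /andP [/andP [xn _] xn1].
  by have [_ ] := CnS n x xn1 xn; rewrite inE.
have O4 : forall n j, (n < K)%N -> vn j n.+1 <= vn j n.
  by move=> n j _; apply: weight_mono => //; apply: setDS.
have O0 : forall n j, 0 <= vn j n by move=> n j; apply: weight_ge0.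
have hB0 : (#|'I_K| <= K)%N by rewrite card_ord.
have := old_game r0 hB0 OJ O1 O2 O3 O4 O0.
have C0 : Cn 0 = set0.
  by apply/setP => x; rewrite inE; apply/negP => /CnP [j]; rewrite ltn0.
have hW : \sum_j vn j 0 = weight w OPT.
  rewrite -(weight_partition w bin OPT); apply: eq_bigr => j _.
  by rewrite /vn C0 setD0.
have hD : forall n, (n <= K)%N -> weight w (Cn n) = \sum_(0 <= m < n) dn m.
  elim=> [|n IH] hn; first by rewrite C0 big_geq // /weight big_set0.
  rewrite big_nat_recr //= -IH ?(ltnW hn) //.
  rewrite (weight_split w (Cn n.+1) (Cn n)) (setIidPr (Cn_mono n)).
  congr (_ + _); rewrite /dn hn; congr weight.
  apply/setP => x; apply/idP/idP.
    by rewrite inE => /andP [xn xn1]; have [_] := CnS n x xn1 xn.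
  rewrite inE => /andP [xn xg]; rewrite inE xn /=; exact: CnS'.
have CK : Cn K = sol_union g.
  by rewrite /Cn /sol_union; apply: eq_bigl => j; rewrite ltn_ord.
by rewrite hW -(hD K (leqnn K)) CK.
Qed.
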